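(* Let $\{P_i\}_{i=1}^M$ be a POVM on a finite-dimensional Hilbert space $\mathcal H$ with all $P_i\neq0$, and let $\mathcal N_i(\rho)=\sqrt{P_i}\,\rho\,\sqrt{P_i}$. The instrument $\{\mathcal N_i\}_{i=1}^M$ is extremal if and only if the operators $P_1,\dots,P_M$ are linearly independent. In particular, every von Neumann–Lüders instrument (the case where the $P_i$ are nonzero mutually orthogonal projectors, $P_iP_j=\delta_{ij}P_i$) is extremal.
   Context: A POVM is a family of positive operators summing to the identity. An instrument with $M$ outcomes on $\mathcal H$ is a family of completely positive maps $\mathcal N_i:\mathcal L(\mathcal H)\to\mathcal L(\mathcal H)$ whose sum is trace preserving; extremal means an extreme point of the convex set of all such instruments with $M$ outcomes. *)

(* Defs.v *)
(* Finite-dimensional Hilbert space H = C^n, with C = algC. *)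
From HB Require Import structures.
From mathcomp Require Import all_boot all_order all_algebra all_field.
Set Implicit Arguments. Unset Strict Implicit. Unset Printing Implicit Defensive.
Import Order.TTheory GRing.Theory Num.Theory.
Local Open Scope ring_scope.

Definition mxadj (m p : nat) (A : 'M[algC]_(m, p)) : 'M[algC]_(p, m) :=
  (map_mx (fun x => x^*) A)^T.

Definition psd (n : nat) (A : 'M[algC]_n) : Prop :=
  forall v : 'cV[algC]_n, 0 <= (mxadj v *m A *m v) ord0 ord0.

(* positivity of a k x k block operator on C^k (x) C^n, given by its blocks *)
Definition block_psd (n k : nat) (B : 'I_k -> 'I_k -> 'M[algC]_n) : Prop :=
  forall v : 'I_k -> 'cV[algC]_n,
    0 <= (\sum_(i < k) \sum_(j < k) (mxadj (v i) *m B i j *m v j) ord0 ord0).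

Definition POVM (n M : nat) (P : 'I_M -> 'M[algC]_n) : Prop :=
  (forall i, psd (P i)) /\ \sum_(i < M) P i = 1%:M.

Definition lin_map (n : nat) (f : 'M[algC]_n -> 'M[algC]_n) : Prop :=
  forall (a : algC) (X Y : 'M[algC]_n), f (a *: X + Y) = a *: f X + f Y.

(* completely positive: id_k (x) f is positive for every k *)
Definition CP (n : nat) (f : 'M[algC]_n -> 'M[algC]_n) : Prop :=
  lin_map f /\
  forall (k : nat) (B : 'I_k -> 'I_k -> 'M[algC]_n),
    block_psd B -> block_psd (fun i j => f (B i j)).

Definition trace_preserving (n : nat) (f : 'M[algC]_n -> 'M[algC]_n) : Prop :=
  forall X : 'M[algC]_n, \tr (f X) = \tr X.

Definition instrument (n M : nat) (N : 'I_M -> 'M[algC]_n -> 'M[algC]_n) : Prop :=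
  (forall i, CP (N i)) /\ trace_preserving (fun X => \sum_(i < M) N i X).

Definition extremal_instrument (n M : nat)
    (N : 'I_M -> 'M[algC]_n -> 'M[algC]_n) : Prop :=
  instrument N /\
  forall (N1 N2 : 'I_M -> 'M[algC]_n -> 'M[algC]_n) (t : algC),
    instrument N1 -> instrument N2 -> 0 < t -> t < 1 ->
    (forall i X, N i X = t *: N1 i X + (1 - t) *: N2 i X) ->
    (forall i X, N1 i X = N i X /\ N2 i X = N i X).

Definition lin_indep (n M : nat) (P : 'I_M -> 'M[algC]_n) : Prop :=
  forall c : 'I_M -> algC, \sum_(i < M) c i *: P i = 0 -> forall i, c i = 0.

(* Main.v *)
Require Import Defs.
From HB Require Import structures.
From mathcomp Require Import all_boot all_order all_algebra all_field.
From Stdlib Require Import FunctionalExtensionality ClassicalEpsilon.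
Set Implicit Arguments. Unset Strict Implicit. Unset Printing Implicit Defensive.
Import Order.TTheory GRing.Theory Num.Theory.
Local Open Scope ring_scope.

Lemma mxadjD m p (A B : 'M[algC]_(m,p)) : mxadj (A + B) = mxadj A + mxadj B.
Proof. by apply/matrixP => i j; rewrite !mxE rmorphD. Qed.

Lemma mxadjZ m p a (A : 'M[algC]_(m,p)) : mxadj (a *: A) = a^* *: mxadj A.
Proof. by apply/matrixP => i j; rewrite !mxE rmorphM. Qed.

Lemma mxadj0 m p : mxadj (0 : 'M[algC]_(m,p)) = 0.
Proof. by apply/matrixP => i j; rewrite !mxE rmorph0. Qed.

Lemma mxadjM m p q (A : 'M[algC]_(m,p)) (B : 'M[algC]_(p,q)) :
  mxadj (A *m B) = mxadj B *m mxadj A.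
Proof.
apply/matrixP => i j; rewrite !mxE rmorph_sum; apply: eq_bigr => k _.
by rewrite !mxE rmorphM mulrC.
Qed.

Lemma mxadj_delta n (a : 'I_n) : mxadj (delta_mx a 0 : 'cV[algC]_n) = delta_mx 0 a.
Proof. by apply/matrixP => i j; rewrite !mxE rmorph_nat andbC. Qed.

Lemma entry_delta m n p (A : 'M[algC]_(m,n)) (B : 'M[algC]_(n,p)) i j x y :
  (A *m delta_mx i j *m B) x y = A x i * B j y.
Proof.
rewrite -(mul_delta_mx (0 : 'I_1)) mulmxA -colE -mulmxA -rowE mxE big_ord1.
by rewrite !mxE.
Qed.

Section Forms.
Variable n : nat.
Implicit Types (F G : 'I_n -> 'I_n -> 'M[algC]_n) (v w : 'I_n -> 'cV[algC]_n).

Definition Hf F v w : algC :=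
  \sum_(i < n) \sum_(j < n) (mxadj (v i) *m F i j *m w j) ord0 ord0.

Definition vcomb v w (a : algC) : 'I_n -> 'cV[algC]_n := fun i => v i + a *: w i.

Lemma Hf_combr F v w1 w2 a : Hf F v (vcomb w1 w2 a) = Hf F v w1 + a * Hf F v w2.
Proof.
rewrite /Hf /vcomb mulr_sumr -big_split; apply: eq_bigr => i _.
rewrite mulr_sumr -big_split; apply: eq_bigr => j _.
by rewrite mulmxDr -scalemxAr [LHS]mxE [X in _ + X = _]mxE.
Qed.

Lemma Hf_combl F v1 v2 w a : Hf F (vcomb v1 v2 a) w = Hf F v1 w + a^* * Hf F v2 w.
Proof.
rewrite /Hf /vcomb mulr_sumr -big_split; apply: eq_bigr => i _.
rewrite mulr_sumr -big_split; apply: eq_bigr => j _.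
by rewrite mxadjD mxadjZ !mulmxDl -!scalemxAl [LHS]mxE [X in _ + X = _]mxE.
Qed.

Lemma Hf_ext F G v w : (forall i j, F i j = G i j) -> Hf F v w = Hf G v w.
Proof. by move=> e; apply: eq_bigr => i _; apply: eq_bigr => j _; rewrite e. Qed.

Lemma Hf_lin F G a b v w :
  Hf (fun i j => a *: F i j + b *: G i j) v w = a * Hf F v w + b * Hf G v w.
Proof.
rewrite /Hf !mulr_sumr -big_split; apply: eq_bigr => i _.
rewrite !mulr_sumr -big_split; apply: eq_bigr => j _.
by rewrite mulmxDr mulmxDl -!scalemxAr -!scalemxAl [LHS]mxE ![X in _ + X = _]mxE [X in X + _ = _]mxE.
Qed.

Lemma block_psdE F : block_psd F <-> forall v, 0 <= Hf F v v.
Proof. by []. Qed.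

End Forms.

Lemma real_lemma (r q : algC) : 0 <= q ->
  (forall x : algC, x \is Num.real -> 0 <= x * r + x * x * q) -> r = 0.
Proof.
move=> q0 H.
have h1 := H 1 (rpred1 _); rewrite !mul1r in h1.
have rr : r \is Num.real.
  have -> : r = (r + q) - q by rewrite addrK.
  by rewrite rpredB // ger0_real.
pose d := q + 1.
have d0 : 0 < d by exact: ltr_wpDl q0 ltr01.
have dn0 : d != 0 by rewrite gt_eqF.
pose x := - r / d.
have xr : x \is Num.real by rewrite /x rpredM ?rpredN ?rpredV // ger0_real // ltW.
have xd : x * d = - r by rewrite /x divfK.
clearbody x.
have h2 := H x xr.
have h3 : 0 <= d * d * (x * r + x * x * q) by rewrite mulr_ge0 // mulr_ge0 // ltW.
have e : d * d * (x * r + x * x * q) = - (r * r).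
  rewrite mulrDr.
  have -> : d * d * (x * r) = (x * d) * (d * r) by rewrite mulrACA [d * x]mulrC.
  have -> : d * d * (x * x * q) = (x * d) * (x * d) * q.
    rewrite !mulrA (mulrC x d) -!mulrA mulrCA; congr (_ * _); rewrite mulrCA; congr (_ * _); by rewrite mulrCA.
  rewrite xd /d mulNr mulrNN mulrDl mul1r mulrDr.
  have -> : r * (q * r) = r * r * q by rewrite mulrCA mulrC.
  by rewrite opprD addrAC addNr add0r.
rewrite e oppr_ge0 in h3.
have : r * r^* == 0.
  by rewrite eq_le mul_conjC_ge0 andbT (conj_Creal rr).
by rewrite mul_conjC_eq0 => /eqP.
Qed.

Lemma Hf_expand n (F : 'I_n -> 'I_n -> 'M[algC]_n) v w l :
  Hf F (vcomb v w l) (vcomb v w l) =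
  Hf F v v + l * Hf F v w + l^* * (Hf F w v + l * Hf F w w).
Proof. by rewrite Hf_combl !Hf_combr. Qed.

Lemma ab0 (a b : algC) : a + b = 0 -> 'i * (a - b) = 0 -> a = 0.
Proof.
move=> h1 /eqP; rewrite mulf_eq0 (negbTE (neq0Ci _)) /= subr_eq0 => /eqP eab.
move: h1; rewrite -eab -mulr2n => /eqP; rewrite mulrn_eq0 /= => /eqP //.
Qed.

Lemma CS n (F : 'I_n -> 'I_n -> 'M[algC]_n) v w :
  block_psd F -> Hf F v v = 0 -> Hf F v w = 0 /\ Hf F w v = 0.
Proof.
move=> P h0.
have q0 : 0 <= Hf F w w := P w.
have r1 : Hf F v w + Hf F w v = 0.
  apply: (real_lemma q0) => x xr; have : 0 <= Hf F (vcomb v w x) (vcomb v w x) := P _.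
  rewrite Hf_expand h0 (conj_Creal xr) add0r.
  by rewrite mulrDr addrA -mulrDr mulrA.
have r2 : 'i * (Hf F v w - Hf F w v) = 0.
  apply: (real_lemma q0) => x xr; have : 0 <= Hf F (vcomb v w ('i * x)) (vcomb v w ('i * x)) := P _.
  rewrite Hf_expand h0 rmorphM /= conjCi (conj_Creal xr) add0r.
  set a := Hf F v w; set b := Hf F w v; set q := Hf F w w.
  have E1 : 'i * x * ('i * x * q) = - (x * x * q).
    by rewrite -['i * x * q]mulrA mulrACA -expr2 sqrCi mulN1r mulrA.
  have E2 : forall c : algC, x * ('i * c) = 'i * x * c.
    by move=> c; rewrite mulrCA mulrA.
  by rewrite !mulNr mulrDr opprD E1 opprK addrA !mulrBr !E2.
have a0 := ab0 r1 r2.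
split => //; move: r1; rewrite a0 add0r //.
Qed.

Section Struct.
Variable n : nat.
Implicit Types (F G : 'I_n -> 'I_n -> 'M[algC]_n) (v w : 'I_n -> 'cV[algC]_n).

Lemma struct F (sig : ('I_n -> 'cV[algC]_n) -> algC) u :
  block_psd F ->
  (forall v1 v2 a, sig (vcomb v1 v2 a) = sig v1 + a * sig v2) ->
  sig u = 1 -> (forall v, sig v = 0 -> Hf F v v = 0) ->
  forall v w, Hf F v w = (sig v)^* * sig w * Hf F u u.
Proof.
move=> P lin su ker.
have h1 : forall v z, Hf F v z = (sig v)^* * Hf F u z.
  move=> v z.
  have s0 : sig (vcomb v u (- sig v)) = 0 by rewrite lin su mulr1 subrr.
  have := (CS z P (ker _ s0)).1.
  by rewrite Hf_combl rmorphN mulNr; apply: subr0_eq.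
have h2 : forall z, Hf F u z = sig z * Hf F u u.
  move=> z.
  have s0 : sig (vcomb z u (- sig z)) = 0 by rewrite lin su mulr1 subrr.
  have := (CS u P (ker _ s0)).2.
  by rewrite Hf_combr mulNr; apply: subr0_eq.
by move=> v w; rewrite h1 h2 mulrA.
Qed.

Definition bvec (i a : 'I_n) : 'I_n -> 'cV[algC]_n :=
  fun i' => if i' == i then delta_mx a 0 else 0.

Lemma Hf_bvec F i a j b : Hf F (bvec i a) (bvec j b) = F i j a b.
Proof.
rewrite /Hf (bigD1 i) //= [X in _ + X]big1 => [|k nk]; last first.
  by apply: big1 => l _; rewrite /bvec (negbTE nk) mxadj0 !mul0mx mxE.
rewrite addr0 (bigD1 j) //= [X in _ + X]big1 => [|l nl]; last first.
  by rewrite /bvec (negbTE nl) mulmx0 mxE.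
by rewrite addr0 /bvec !eqxx mxadj_delta -rowE -colE !mxE.
Qed.

Definition sigS (S : 'M[algC]_n) v : algC := \sum_(j < n) (S *m v j) j ord0.
Definition tauS (S : 'M[algC]_n) v : algC := \sum_(i < n) (mxadj (v i) *m S) ord0 i.

Lemma sigS_lin S v1 v2 a : sigS S (vcomb v1 v2 a) = sigS S v1 + a * sigS S v2.
Proof.
rewrite /sigS mulr_sumr -big_split; apply: eq_bigr => j _.
by rewrite /vcomb mulmxDr -scalemxAr !mxE.
Qed.

Lemma sigS_bvec S j b : sigS S (bvec j b) = S j b.
Proof.
rewrite /sigS (bigD1 j) //= [X in _ + X]big1 => [|k nk]; last by rewrite /bvec (negbTE nk) mulmx0 mxE.
by rewrite addr0 /bvec eqxx -colE mxE.
Qed.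

Lemma Hf_AdS S v w :
  Hf (fun i j => S *m delta_mx i j *m S) v w = tauS S v * sigS S w.
Proof.
rewrite /Hf /tauS /sigS big_distrl; apply: eq_bigr => i _.
rewrite big_distrr; apply: eq_bigr => j _.
by rewrite !mulmxA -(mulmxA _ S (w j)) entry_delta.
Qed.

End Struct.

Lemma psdH n (F : 'I_n -> 'I_n -> 'M[algC]_n) v : block_psd F -> 0 <= Hf F v v.
Proof. by move=> P; apply: P. Qed.

Lemma dominate n (S : 'M[algC]_n) (F G : 'I_n -> 'I_n -> 'M[algC]_n) (t : algC) :
  S != 0 -> block_psd F -> block_psd G -> 0 < t -> t < 1 ->
  (forall i j, S *m delta_mx i j *m S = t *: F i j + (1 - t) *: G i j) ->
  exists c, forall i j, F i j = c *: (S *m delta_mx i j *m S).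
Proof.
move=> S0 psdF psdG t0 t1 hS.
pose AS := fun i j => S *m delta_mx i j *m S.
have HS : forall v w, Hf AS v w = t * Hf F v w + (1 - t) * Hf G v w.
  by move=> v w; rewrite -Hf_lin; apply: Hf_ext.
have t1' : 0 <= 1 - t by rewrite subr_ge0 ltW.
have psdAS : block_psd AS.
  apply/block_psdE => v; rewrite HS; apply: addr_ge0; apply: mulr_ge0 => //; by [exact: ltW | exact: psdH].
have kerAS : forall v, sigS S v = 0 -> Hf AS v v = 0.
  by move=> v h; rewrite /AS Hf_AdS h mulr0.
have kerF : forall v, sigS S v = 0 -> Hf F v v = 0.
  move=> v h; have := HS v v; rewrite kerAS // => /esym/eqP.
  rewrite paddr_eq0; last 2 first.
  - by apply: mulr_ge0; [exact: ltW | exact: psdH].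
  - by apply: mulr_ge0 => //; exact: psdH.
  by case/andP; rewrite mulf_eq0 (gt_eqF t0) /= => /eqP.
have [[j b] /= Sjb] : exists p : 'I_n * 'I_n, S p.1 p.2 != 0.
  case: (pickP (fun p : 'I_n * 'I_n => S p.1 p.2 != 0)) => [p Sp|all0].
    by exists p.
  exfalso; move/eqP: S0; apply; apply/matrixP => x y.
  by move: (all0 (x, y)) => /= /negbFE/eqP ->; rewrite mxE.
pose u := vcomb (fun _ => 0) (bvec j b) (S j b)^-1.
have su : sigS S u = 1.
  rewrite sigS_lin sigS_bvec mulVf // addrC -[RHS]addr0; congr (_ + _).
  by rewrite /sigS big1 // => k _; rewrite mulmx0 mxE.
have dF := struct psdF (sigS_lin S) su kerF.
have dA := struct psdAS (sigS_lin S) su kerAS.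
have dS0 : Hf AS u u != 0.
  apply/eqP => d0; have := dA (bvec b j) (bvec j b).
  rewrite d0 mulr0 Hf_bvec /AS entry_delta => /eqP.
  by rewrite mulf_eq0 orbb (negbTE Sjb).
exists (Hf F u u / Hf AS u u) => i k.
apply/matrixP => a c.
rewrite [RHS]mxE -(Hf_bvec F) -[(S *m delta_mx i k *m S) a c]/(AS i k a c) -(Hf_bvec AS).
by rewrite dF [Hf AS (bvec i a) _]dA mulrCA divfK.
Qed.

Section Lin.
Variable n : nat.
Variable f : 'M[algC]_n -> 'M[algC]_n.
Hypothesis lf : lin_map f.

Lemma lin0 : f 0 = 0.
Proof.
have := lf 1 0 0; rewrite !scale1r addr0 => h.
by have := congr1 (fun z => z - f 0) h; rewrite /= addrK subrr => e; rewrite -e.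
Qed.

Lemma linD X Y : f (X + Y) = f X + f Y.
Proof. by have := lf 1 X Y; rewrite !scale1r. Qed.

Lemma linZ a X : f (a *: X) = a *: f X.
Proof. by have := lf a X 0; rewrite !addr0 lin0 addr0. Qed.

Lemma lin_sum (I : Type) (r : seq I) (P : pred I) (g : I -> 'M[algC]_n) :
  f (\sum_(i <- r | P i) g i) = \sum_(i <- r | P i) f (g i).
Proof. exact: (big_morph f linD lin0). Qed.

Lemma from_basis (c : algC) (S : 'M[algC]_n) :
  (forall i j, f (delta_mx i j) = c *: (S *m delta_mx i j *m S)) ->
  forall X, f X = c *: (S *m X *m S).
Proof.
move=> hb X; rewrite {1}(matrix_sum_delta X) lin_sum.
rewrite {2}(matrix_sum_delta X) mulmx_sumr mulmx_suml scaler_sumr.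
apply: eq_bigr => i _; rewrite lin_sum mulmx_sumr mulmx_suml scaler_sumr.
apply: eq_bigr => j _; rewrite linZ hb -scalemxAr -scalemxAl !scalerA mulrC //.
Qed.

End Lin.

Lemma trace_one n (A : 'M[algC]_n) :
  (forall X : 'M[algC]_n, \tr (X *m A) = \tr X) -> A = 1%:M.
Proof.
move=> h; apply/matrixP => a b.
have := h (delta_mx b a).
rewrite -(mul_delta_mx (0 : 'I_1)) mxtrace_mulC mulmxA mxtrace_mulC.
rewrite mulmxA -rowE -colE [\tr (delta_mx b 0 *m _)]mxtrace_mulC mul_delta_mx_cond.
rewrite /mxtrace !big_ord1 !mxE => ->.
by case: (a == b); rewrite ?mulr0n ?mulr1n ?mxE.
Qed.

Lemma E_psd n : block_psd (fun i j => delta_mx i j : 'M[algC]_n).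
Proof.
apply/block_psdE => v; rewrite /Hf.
have -> : \sum_(i < n) \sum_(j < n) (mxadj (v i) *m delta_mx i j *m v j) ord0 ord0
   = (\sum_(i < n) (v i i ord0)^*) * \sum_(j < n) v j j ord0.
  rewrite big_distrl; apply: eq_bigr => i _; rewrite big_distrr; apply: eq_bigr => j _.
  by rewrite entry_delta !mxE.
by rewrite -rmorph_sum mulrC mul_conjC_ge0.
Qed.

Lemma CP_Ad n (S : 'M[algC]_n) (r : algC) :
  mxadj S = S -> 0 <= r -> CP (fun X => r *: (S *m X *m S)).
Proof.
move=> hS r0; split.
  move=> a X Y; rewrite mulmxDr mulmxDl -scalemxAr -scalemxAl scalerDr !scalerA.
  by rewrite mulrC.
move=> k B PB v.
have := PB (fun i => S *m v i).
have -> : \sum_(i < k) \sum_(j < k)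
     (mxadj (v i) *m (r *: (S *m B i j *m S)) *m v j) ord0 ord0 =
   r * \sum_(i < k) \sum_(j < k)
     (mxadj (S *m v i) *m B i j *m (S *m v j)) ord0 ord0.
  rewrite mulr_sumr; apply: eq_bigr => i _; rewrite mulr_sumr; apply: eq_bigr => j _.
  by rewrite mxadjM hS -scalemxAr -scalemxAl mxE !mulmxA.
by move=> h; rewrite mulr_ge0.
Qed.

Lemma TP_sum n M (P S : 'I_M -> 'M[algC]_n) (a : 'I_M -> algC) :
  (forall i, S i *m S i = P i) -> \sum_(i < M) a i *: P i = 1%:M ->
  trace_preserving (fun X => \sum_(i < M) a i *: (S i *m X *m S i)).
Proof.
move=> hS hP X.
transitivity (\tr (X *m \sum_(i < M) a i *: P i)); last by rewrite hP mulmx1.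
rewrite mulmx_sumr !raddf_sum; apply: eq_bigr => i _.
by rewrite -scalemxAr /= !mxtraceZ -hS mxtrace_mulC mulmxA mxtrace_mulC mulmxA.
Qed.

Section Herm.
Variable n : nat.
Variable S : 'M[algC]_n.
Definition Bf (v w : 'cV[algC]_n) := (mxadj v *m S *m w) ord0 ord0.

Lemma Bf_r v w1 w2 a : Bf v (w1 + a *: w2) = Bf v w1 + a * Bf v w2.
Proof. by rewrite /Bf mulmxDr -scalemxAr [LHS]mxE [X in _ + X = _]mxE. Qed.

Lemma Bf_l v1 v2 w a : Bf (v1 + a *: v2) w = Bf v1 w + a^* * Bf v2 w.
Proof.
by rewrite /Bf mxadjD mxadjZ !mulmxDl -!scalemxAl [LHS]mxE [X in _ + X = _]mxE.
Qed.

Lemma Bf_delta a b : Bf (delta_mx a 0) (delta_mx b 0) = S a b.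
Proof. by rewrite /Bf mxadj_delta -rowE -colE !mxE. Qed.

Lemma psd_herm : psd S -> mxadj S = S.
Proof.
move=> P; apply/matrixP => a b; rewrite !mxE /=.
pose ea : 'cV[algC]_n := delta_mx a 0; pose eb : 'cV[algC]_n := delta_mx b 0.
have Q : forall z, 0 <= S a a + z * S a b + z^* * (S b a + z * S b b).
  move=> z; have := P (ea + z *: eb).
  by rewrite -/(Bf _ _) Bf_l !Bf_r !Bf_delta.
have ra : S a a \is Num.real by have := P ea; rewrite -/(Bf _ _) Bf_delta => /ger0_real.
have rb : S b b \is Num.real by have := P eb; rewrite -/(Bf _ _) Bf_delta => /ger0_real.
set x := S a b; set y := S b a; set p := S a a; set q := S b b.
have L : forall u : algC, u = (p + u + q) - (p + q).
  by move=> u; rewrite [p + u + q]addrAC [p + q + u]addrC addrK.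
have R1 : (x + y)^* = x + y.
  apply/CrealP; rewrite (L (x + y)) rpredB ?(rpredD ra rb) // addrA.
  by have := Q 1; rewrite rmorph1 !mul1r addrA => /ger0_real.
have R2 : ('i * (x - y))^* = 'i * (x - y).
  apply/CrealP; rewrite (L ('i * (x - y))) rpredB ?(rpredD ra rb) // mulrBr addrA.
  have := Q 'i; rewrite conjCi mulNr mulrDr mulrA -expr2 sqrCi mulN1r opprD opprK addrA.
  by move/ger0_real.
have D : - (x^* - y^*) = x - y.
  move: R2; rewrite rmorphM /= conjCi rmorphB /= mulNr -mulrN; apply: (mulfI (neq0Ci algC)).
have R1' : x^* + y^* = x + y by rewrite -R1 rmorphD.
have : (x^* + y^*) + - (x^* - y^*) = (x + y) + (x - y) by rewrite R1' D.
rewrite opprB [x^* + _]addrC addrACA subrr addr0 addrACA subrr addr0 -!mulr2n.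
by move/(pmulrnI (isT : (0 < 2)%N)).
Qed.
End Herm.

Lemma CP_Ad1 n (S : 'M[algC]_n) : mxadj S = S -> CP (fun X => S *m X *m S).
Proof.
move=> h.
have -> : (fun X => S *m X *m S) = (fun X => 1 *: (S *m X *m S)).
  by apply: functional_extensionality => X; rewrite scale1r.
exact: CP_Ad h ler01.
Qed.

Lemma converse n M (P S : 'I_M -> 'M[algC]_n) :
  POVM P -> (forall i, P i != 0) -> (forall i, psd (S i) /\ S i *m S i = P i) ->
  lin_indep P -> extremal_instrument (fun i (rho : 'M[algC]_n) => S i *m rho *m S i).
Proof.
move=> [Ppsd Psum] Pn0 hS li.
have herm i : mxadj (S i) = S i := psd_herm (hS i).1.
have SS i : S i *m S i = P i := (hS i).2.
have S0 i : S i != 0.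
  by apply/eqP => e; move/eqP: (Pn0 i); apply; rewrite -SS e mul0mx.
have TP : trace_preserving (fun X => \sum_(i < M) S i *m X *m S i).
  have h := TP_sum (a := fun _ => 1) SS.
  move=> X; rewrite -(h _ X); last by rewrite -Psum; apply: eq_bigr => i _; rewrite scale1r.
  by congr (\tr _); apply: eq_bigr => i _; rewrite scale1r.
split; first by split => // i; apply: CP_Ad1.
move=> N1 N2 t [CP1 TP1] [CP2 TP2] t0 t1 hN.
have key : forall i X, N1 i X = S i *m X *m S i.
  have hc : forall i, exists c, forall X, N1 i X = c *: (S i *m X *m S i).
    move=> i.
    have [c hc] := dominate (F := fun j k => N1 i (delta_mx j k))
       (G := fun j k => N2 i (delta_mx j k)) (S0 i)
       ((CP1 i).2 _ _ (@E_psd n)) ((CP2 i).2 _ _ (@E_psd n)) t0 t1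
       (fun j k => hN i (delta_mx j k)).
    by exists c; exact: (@from_basis _ _ (CP1 i).1 c (S i) hc).
  pose c i := proj1_sig (constructive_indefinite_description _ (hc i)).
  have hc' i X : N1 i X = c i *: (S i *m X *m S i).
    exact: (proj2_sig (constructive_indefinite_description _ (hc i)) X).
  have sum1 : \sum_(i < M) c i *: P i = 1%:M.
    apply: trace_one => X; rewrite -(TP1 X) /=.
    rewrite mulmx_sumr !raddf_sum; apply: eq_bigr => i _.
    rewrite hc' -scalemxAr /= !mxtraceZ -SS; congr (_ * _).
    by rewrite [RHS]mxtrace_mulC [in RHS]mulmxA mxtrace_mulC.
  have c1 : forall i, c i = 1.
    move=> i; apply/eqP; rewrite -subr_eq0; apply/eqP; move: i; apply: li.
    under eq_bigr do rewrite scalerBl scale1r.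
    by rewrite sumrB sum1 Psum subrr.
  by move=> i X; rewrite hc' c1 scale1r.
move=> i X; split; first by rewrite key.
have h1t : 1 - t != 0 by rewrite subr_eq0 eq_sym lt_eqF.
have e := hN i X; rewrite key in e.
apply: (scalerI h1t); rewrite [RHS]scalerBl [in RHS]scale1r.
by rewrite {1}e addrAC subrr add0r.
Qed.

Lemma half_sum : (2 : algC)^-1 + 2^-1 = 1.
Proof. by rewrite -[RHS](@mulVf _ 2) ?pnatr_eq0 // mulr_natr mulr2n. Qed.

Lemma forward_real n M (P S : 'I_M -> 'M[algC]_n) :
  POVM P -> (forall i, P i != 0) -> (forall i, psd (S i) /\ S i *m S i = P i) ->
  extremal_instrument (fun i (rho : 'M[algC]_n) => S i *m rho *m S i) ->
  forall r : 'I_M -> algC, (forall i, r i \is Num.real) ->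
  \sum_(i < M) r i *: P i = 0 -> forall i, r i = 0.
Proof.
move=> [Ppsd Psum] Pn0 hS [_ ext] r rr hr.
have herm i : mxadj (S i) = S i := psd_herm (hS i).1.
have SS i : S i *m S i = P i := (hS i).2.
pose T := \sum_(i < M) `|r i|.
pose K := T + 1.
have T0 : 0 <= T by apply: sumr_ge0 => i _; exact: normr_ge0.
have K0 : 0 < K by exact: ltr_wpDl T0 ltr01.
pose e := K^-1.
have e0 : 0 < e by rewrite invr_gt0.
have eb : forall i, e * `|r i| <= 1.
  move=> i; have : `|r i| <= K.
    apply: le_trans (_ : T <= K); last by rewrite lerDl ler01.
    rewrite /T (bigD1 i) //= lerDl; apply: sumr_ge0 => j _; exact: normr_ge0.
  move/(ler_wpM2l (ltW e0)); rewrite mulVf // gt_eqF //.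
have pos1 : forall i, 0 <= 1 + e * r i.
  move=> i; have h : - r i <= `|r i| by rewrite -normrN real_ler_norm ?rpredN.
  have -> : 1 + e * r i = (1 - e * `|r i|) + e * (r i + `|r i|).
    by rewrite mulrDr addrCA subrK addrC.
  rewrite addr_ge0 ?subr_ge0 // mulr_ge0 ?(ltW e0) //.
  have : 0 <= `|r i| - - r i by rewrite subr_ge0.
  by rewrite opprK addrC.
have pos2 : forall i, 0 <= 1 - e * r i.
  move=> i; have h : r i <= `|r i| by rewrite real_ler_norm.
  have -> : 1 - e * r i = (1 - e * `|r i|) + e * (`|r i| - r i).
    by rewrite mulrBr addrA subrK.
  by rewrite addr_ge0 ?subr_ge0 // mulr_ge0 ?(ltW e0) // subr_ge0.
pose N1 := fun i (X : 'M[algC]_n) => (1 + e * r i) *: (S i *m X *m S i).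
pose N2 := fun i (X : 'M[algC]_n) => (1 - e * r i) *: (S i *m X *m S i).
have I1 : instrument N1.
  split => [i|]; first exact: CP_Ad (herm i) (pos1 i).
  apply: TP_sum => //.
  under eq_bigr do rewrite scalerDl scale1r -scalerA.
  by rewrite big_split /= -scaler_sumr hr scaler0 addr0 Psum.
have I2 : instrument N2.
  split => [i|]; first exact: CP_Ad (herm i) (pos2 i).
  apply: TP_sum => //.
  under eq_bigr do rewrite scalerBl scale1r -scalerA.
  by rewrite sumrB /= -scaler_sumr hr scaler0 subr0 Psum.
have h0 : (0 : algC) < 2^-1 by rewrite invr_gt0 ltr0n.
have h1 : (2 : algC)^-1 < 1 by rewrite invf_lt1 ?ltr0n // ltr1n.
have dec : forall i X, S i *m X *m S i = 2^-1 *: N1 i X + (1 - 2^-1) *: N2 i X.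
  move=> i X; rewrite /N1 /N2 !scalerA -scalerDl.
  have -> : 1 - (2 : algC)^-1 = 2^-1 by rewrite -{1}half_sum addrK.
  by rewrite -mulrDr addrACA subrr addr0 mulrDr mulr1 half_sum scale1r.
move=> i.
have [+ _] := ext N1 N2 2^-1 I1 I2 h0 h1 dec i 1%:M.
rewrite /N1 mulmx1 SS => /eqP.
rewrite scalerDl scale1r -subr_eq0 addrC addKr scaler_eq0 (negbTE (Pn0 i)) orbF.
by rewrite mulf_eq0 (gt_eqF e0) /= => /eqP.
Qed.

Lemma forward n M (P S : 'I_M -> 'M[algC]_n) :
  POVM P -> (forall i, P i != 0) -> (forall i, psd (S i) /\ S i *m S i = P i) ->
  extremal_instrument (fun i (rho : 'M[algC]_n) => S i *m rho *m S i) ->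
  lin_indep P.
Proof.
move=> hP Pn0 hS ext c hc i.
have herm j : mxadj (P j) = P j := psd_herm (hP.1 j).
have hcc : \sum_(j < M) (c j)^* *: P j = 0.
  have := congr1 (@mxadj _ _) hc; rewrite mxadj0 (big_morph _ (@mxadjD _ _) (@mxadj0 _ _)).
  by under eq_bigr do rewrite mxadjZ herm.
have R := forward_real hP Pn0 hS ext.
apply: (@ab0 _ (c i)^*).
  apply: (R (fun j => c j + (c j)^*)) => [j|].
  - by apply/CrealP; rewrite rmorphD /= conjCK addrC.
  - by under eq_bigr do rewrite scalerDl; rewrite big_split /= hc hcc addr0.
apply: (R (fun j => 'i * (c j - (c j)^*))) => [j|].
- apply/CrealP; rewrite rmorphM /= conjCi rmorphB /= conjCK mulNr -mulrN opprB //.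
- under eq_bigr do rewrite -scalerA scalerBl.
  by rewrite -scaler_sumr sumrB hc hcc subr0 scaler0.
Qed.

Theorem mainTheorem17 :
  (forall (n M : nat) (P S : 'I_M -> 'M[algC]_n),
      POVM P -> (forall i, P i != 0) ->
      (forall i, psd (S i) /\ S i *m S i = P i) ->
      (extremal_instrument (fun i (rho : 'M[algC]_n) => S i *m rho *m S i)
       <-> lin_indep P))
  /\
  (forall (n M : nat) (P : 'I_M -> 'M[algC]_n),
      POVM P -> (forall i, P i != 0) ->
      (forall i j, P i *m P j = if i == j then P i else 0) ->
      extremal_instrument (fun i (rho : 'M[algC]_n) => P i *m rho *m P i)).
Proof.
split.
  move=> n M P S hP hn hS; split; [exact: forward | exact: converse].
move=> n M P hP hn hPP.
apply: (converse hP hn) => [i|].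
  by split; [exact: hP.1 | rewrite hPP eqxx].
move=> c hc i.
have : (\sum_(j < M) c j *: P j) *m P i = 0 by rewrite hc mul0mx.
rewrite mulmx_suml (bigD1 i) //= big1 => [|j nj]; last first.
  by rewrite -scalemxAl hPP (negbTE nj) scaler0.
rewrite addr0 -scalemxAl hPP eqxx => /eqP.
by rewrite scaler_eq0 (negbTE (hn i)) orbF => /eqP.
Qed.
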